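(* Let $\mathcal{T}$ be the tree constructed below in a metric space of doubling dimension at most $\kappa$. Every node $\langle j,r\rangle$ of $\mathcal{T}$ has at most $2^{4\kappa}$ children.
   Context: $(V,d)$ is a metric space of diameter $W$ whose doubling dimension is at most $\kappa$: every ball $B(x,\rho)=\{y\in V:d(x,y)\le\rho\}$ can be covered by $2^\kappa$ balls of radius $\rho/2$. $F\subseteq V$ is a finite set of facilities with opening costs $f_j>0$, $f_{\min}=\min_j f_j$. Let $\rho_{\min}=\lfloor\log_5 f_{\min}\rfloor$, $\rho_{\max}=\lceil\log_5 W\rceil$. For each integer $r\in[\rho_{\min},\rho_{\max}]$, let $J'_r=\{j\in F:f_j\le 5^r\}$ and let $J_r$ be a maximal subset of $J'_r$ such that any two facilities of $J_r$ are at distance greater than $5^{r+1}$. $\Pi=\{\langle j,r\rangle:\rho_{\min}\le r\le\rho_{\max},\ j\in J_r\}$. The tree $\mathcal{T}$ on $\Pi$ has as root the unique pair with $r=\rho_{\max}$, and for $r<\rho_{\max}$ and $j\in J_r$, $\mathrm{parent}(j,r)=\langle j',r+1\rangle$ where $j'$ is a facility of $J_{r+1}$ closest to $j$ (ties broken arbitrarily). *)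

(* Defs.v *)
From HB Require Import structures.
From mathcomp Require Import all_boot all_order all_algebra.
From mathcomp Require Import all_classical all_reals all_analysis.
Set Implicit Arguments. Unset Strict Implicit. Unset Printing Implicit Defensive.
Import Order.TTheory GRing.Theory Num.Theory.
Local Open Scope classical_set_scope.
Local Open Scope ring_scope.

Section Defs.
Variables (R : realType) (V : eqType).
Implicit Types (d : V -> V -> R).

Definition is_metric d : Prop :=
  [/\ forall x y, 0 <= d x y,
      forall x y, d x y = 0 <-> x = y,
      forall x y, d x y = d y x &
      forall x y z, d x z <= d x y + d y z].

Definition mball d (x : V) (rho : R) : set V := [set y | d x y <= rho].

Definition doubling_dim_le d (kappa : R) : Prop :=
  forall (x : V) (rho : R), exists S : seq V,
    (size S)%:R <= 2 `^ kappa /\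
    mball d x rho `<=` [set y | exists2 c, c \in S & mball d c (rho / 2) y].

Definition is_diameter d (W : R) : Prop :=
  (forall x y, d x y <= W) /\
  (forall e, 0 < e -> exists x y, W - e < d x y).

(* minimum opening cost over the (nonempty) facility list F *)
Definition fmin (f : V -> R) (F : seq V) : R :=
  match F with
  | [::] => 0
  | j :: s => foldr (fun k m => Num.min (f k) m) (f j) s
  end.

Definition log5 (x : R) : R := ln x / ln 5.
Definition rho_min (f : V -> R) (F : seq V) : int := Num.floor (log5 (fmin f F)).
Definition rho_max (W : R) : int := Num.ceil (log5 W).

Definition Jprime (f : V -> R) (F : seq V) (r : int) : set V :=
  [set j | j \in F /\ f j <= 5%:R ^ r].

Definition separated d (S : set V) (delta : R) : Prop :=
  forall a b, S a -> S b -> a <> b -> delta < d a b.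

Definition is_J_r d (f : V -> R) (F : seq V) (r : int) (Jr : set V) : Prop :=
  [/\ Jr `<=` Jprime f F r,
      separated d Jr (5%:R ^ (r + 1)) &
      forall S : set V, Jr `<=` S -> S `<=` Jprime f F r ->
        separated d S (5%:R ^ (r + 1)) -> S = Jr].

(* par j r = j' where parent(j,r) = <j', r+1>, j' a facility of J_{r+1}
   closest to j *)
Definition is_parent_fun d (J : int -> set V) (lo hi : int)
  (par : V -> int -> V) : Prop :=
  forall (r : int) (j : V), (lo <= r)%R -> (r < hi)%R -> J r j ->
    J (r + 1) (par j r) /\ (forall k, J (r + 1) k -> d j (par j r) <= d j k).

Definition is_child (J : int -> set V) (lo : int) (par : V -> int -> V)
  (j : V) (r : int) (c : V) : Prop :=
  (lo <= r - 1)%R /\ J (r - 1) c /\ par c (r - 1) = j.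

End Defs.

(* Main.v *)
Require Import Defs.
From HB Require Import structures.
From mathcomp Require Import all_boot all_order all_algebra.
From mathcomp Require Import all_classical all_reals all_analysis.
From mathcomp Require Import ring lra.
Import Order.TTheory GRing.Theory Num.Theory.
Local Open Scope classical_set_scope.
Local Open Scope ring_scope.

Lemma cover_step (R : realType) (V : eqType) (d : V -> V -> R) (kappa : R) :
  doubling_dim_le d kappa -> forall (S : seq V) (t : R),
  exists T : seq V, (size T)%:R <= (size S)%:R * 2 `^ kappa /\
    (forall y, (exists2 c, c \in S & mball d c t y) ->
               exists2 c, c \in T & mball d c (t / 2) y).
Proof.
move=> Hdd S t; elim: S => [|a S [T [HT1 HT2]]].
  by exists [::]; split; [rewrite mul0r | move=> y [c]].
have [A [HA1 HA2]] := Hdd a t.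
exists (A ++ T); split.
  rewrite size_cat natrD /= -addn1 natrD mulrDl mul1r addrC.
  exact: lerD.
move=> y [c]; rewrite inE => /orP [/eqP -> |cS] Hy.
  have [c' c'A Hc'] := HA2 y Hy.
  by exists c' => //; rewrite mem_cat c'A.
have [c' c'T Hc'] := HT2 y (ex_intro2 _ _ c cS Hy).
by exists c' => //; rewrite mem_cat c'T orbT.
Qed.

Lemma count_inj (V : eqType) (P : V -> V -> Prop) (s : seq V) : forall T : seq V,
  uniq s -> (forall c, c \in s -> exists2 t, t \in T & P c t) ->
  (forall c c' t, c \in s -> c' \in s -> P c t -> P c' t -> c = c') ->
  (size s <= size T)%N.
Proof.
elim: s => [//|c s IH] T /= /andP [cs us] Hex Hinj.
have [t tT Pt] := Hex c (mem_head _ _).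
have := IH (rem t T) us.
rewrite size_rem //.
have ms : forall x, x \in s -> x \in c :: s by move=> x xs; rewrite inE xs orbT.
have HT : (0 < size T)%N by case: T tT {Hex Hinj IH}.
move=> H; suff : (size s <= (size T).-1)%N by case: (size T) HT.
apply: H.
  move=> c' c's.
  have [t' t'T Pt'] := Hex c' (ms _ c's).
  exists t' => //; apply: rem_mem => //.
  apply/eqP => Et; subst t'.
  have Ec := Hinj c c' t (mem_head _ _) (ms _ c's) Pt Pt'.
  by move: cs; rewrite Ec c's.
by move=> a b u ??; apply: Hinj; apply: ms.
Qed.

Theorem lemma4 (R : realType) (V : eqType) (d : V -> V -> R) (W kappa : R)
  (F : seq V) (f : V -> R) (J : int -> set V) (par : V -> int -> V) :
  is_metric d -> is_diameter d W -> doubling_dim_le d kappa ->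
  F <> [::] -> (forall j, j \in F -> 0 < f j) ->
  (forall r : int, rho_min f F <= r <= rho_max W -> is_J_r d f F r (J r)) ->
  is_parent_fun d J (rho_min f F) (rho_max W) par ->
  forall (j : V) (r : int), rho_min f F <= r <= rho_max W -> J r j ->
  forall s : seq V, uniq s -> (forall c, c \in s -> is_child J (rho_min f F) par j r c) ->
  (size s)%:R <= 2 `^ (4 * kappa).
Proof.
move=> [d0 d_eq dsym dtri] _ Hdd _ _ HJ Hpar j r /andP [Hlo Hhi] Jj s us Hs.
set b : R := 5%:R ^ (r - 1).
have b0 : 0 < b by apply: exprz_gt0.
have u5 : (5%:R : R) \is a GRing.unit by rewrite unitfE pnatr_eq0.
have e1 : (5%:R : R) ^ r = b * 5.
  by rewrite /b -[X in _ = _ * X]expr1z -exprzDr // subrK.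
have e2 : (5%:R : R) ^ (r + 1) = b * 5 * 5 by rewrite exprzDr // expr1z e1.
have lt1 : r - 1 < r by rewrite gtrBl ltr01.
have child : forall c, c \in s -> J (r - 1) c /\ d j c <= b * 5 * 5.
  move=> c cs; have [Hlo1 [Jc Pc]] := Hs c cs.
  have Hr1 : rho_min f F <= r - 1 <= rho_max W.
    by rewrite Hlo1 /=; apply: le_trans Hhi; rewrite lerBlDr lerDl.
  have [Jp1 Jp2 Jp3] := HJ _ Hr1.
  have [Jp _] := Hpar (r - 1) c Hlo1 (lt_le_trans lt1 Hhi) Jc.
  rewrite subrK Pc in Jp; split => //.
  rewrite dsym.
  have [JJ1 JJ2 JJ3] := HJ r (introT andP (conj Hlo Hhi)).
  apply: contrapT => /negP; rewrite -ltNge => Hfar.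
  have Hall : forall k, J r k -> b * 5 * 5 < d c k.
    move=> k Jk; apply: lt_le_trans Hfar _.
    by have [_] := Hpar (r - 1) c Hlo1 (lt_le_trans lt1 Hhi) Jc;
       rewrite subrK Pc => /(_ k Jk).
  have Jrc : J r c.
    have := JJ3 (J r `|` [set c]) (fun x h => or_introl h).
    move=> H; rewrite -(H _ _) //; first by right.
    - move=> x [/JJ1 //|->]; have [cF fc] := Jp1 c Jc; split => //.
      apply: le_trans fc _; rewrite -/b e1; lra.
    - move=> x y [Jx|->] [Jy|->] xy.
      + exact: JJ2.
      + by rewrite dsym e2; apply: Hall.
      + by rewrite e2; apply: Hall.
      + by [].
  have := Hall c Jrc; rewrite (proj2 (d_eq c c) erefl); lra.
have sep : forall x y, x \in s -> y \in s -> x <> y -> b * 5 < d x y.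
  move=> x y xs ys xy.
  have [Jx _] := child x xs; have [Jy _] := child y ys.
  have [Hlo1 _] := Hs x xs.
  have Hr1 : rho_min f F <= r - 1 <= rho_max W.
    by rewrite Hlo1 /=; apply: le_trans Hhi; rewrite lerBlDr lerDl.
  have [_ Jp2 _] := HJ _ Hr1.
  by rewrite -e1 -{1}(subrK 1 r); apply: Jp2.
set rho := b * 5 * 5.
have [T1 [S1 C1]] := @cover_step _ _ _ _ Hdd [:: j] rho.
have [T2 [S2 C2]] := @cover_step _ _ _ _ Hdd T1 (rho / 2).
have [T3 [S3 C3]] := @cover_step _ _ _ _ Hdd T2 (rho / 2 / 2).
have [T4 [S4 C4]] := @cover_step _ _ _ _ Hdd T3 (rho / 2 / 2 / 2).
have K0 : 0 <= 2 `^ kappa by apply: powR_ge0.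
have HT4 : (size T4)%:R <= 2 `^ (4 * kappa).
  have -> : 4 * kappa = kappa + kappa + kappa + kappa by ring.
  rewrite !powRD ?pnatr_eq0 ?implybT //.
  apply: (le_trans S4); rewrite ler_wpM2r //.
  apply: (le_trans S3); rewrite ler_wpM2r //.
  apply: (le_trans S2); rewrite ler_wpM2r //.
  by apply: (le_trans S1); rewrite /= mul1r.
apply: le_trans HT4; rewrite ler_nat.
apply: (@count_inj V (fun c t => d t c <= rho / 2 / 2 / 2 / 2)) => //.
  move=> c cs; apply: C4; apply: C3; apply: C2; apply: C1.
  by exists j; [rewrite mem_head | have [_ ?] := child c cs].
move=> c c' t cs c's H1 H2; apply: contrapT => cc.
have := sep c c' cs c's cc.
have := dtri c t c'; rewrite dsym in H1.
rewrite /rho in H1 H2; lra.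
Qed.
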